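(* For every odd integer $\ell\ge 17$ there exists a palindrome of length $\ell$ over a ternary alphabet whose critical exponent is exactly $\tfrac{7}{4}$.
   Context: A word $x=x[1..n]$ has period $q$ if $x[i]=x[i+q]$ for $1\le i\le n-q$. For integers $p>q\ge1$, $x$ is a $(p/q)$-power if it has length $p$ and period $q$. The exponent $\exp(w)$ of a finite nonempty word $w$ is the largest rational $p/q$ such that $w$ is a $(p/q)$-power. The critical exponent of $w$ is the maximum of $\exp(w')$ over all nonempty factors $w'$ of $w$. A palindrome is a word equal to its reversal. *)

(* Defs.v *)
From mathcomp Require Import all_boot all_order all_algebra.
Set Implicit Arguments. Unset Strict Implicit. Unset Printing Implicit Defensive.
Import Order.TTheory GRing.Theory Num.Theory.

(* Positions are 0-based: x[1..n] of the paper is nth ord0 x 0 .. nth ord0 x (n-1). *)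
Definition word := seq 'I_3.

Definition has_period (x : word) (q : nat) : bool :=
  all (fun i => (i + q < size x) ==> (nth ord0 x i == nth ord0 x (i + q)))
      (iota 0 (size x)).

Definition exponent (x : word) : rat :=
  foldr Num.max (0 : rat)
    [seq ((size x)%:R / q%:R : rat)%R | q <- iota 1 (size x) & has_period x q].

Definition factor (x : word) (i j : nat) : word := take j (drop i x).

Definition crit_exp (x : word) : rat :=
  foldr Num.max (0 : rat)
    [seq exponent (factor x i j) | i <- iota 0 (size x), j <- iota 1 (size x - i)].

(* Main.v *)
Require Import Defs.
From mathcomp Require Import all_boot all_order all_algebra zify.
Set Implicit Arguments. Unset Strict Implicit. Unset Printing Implicit Defensive.


Definition o0 : 'I_3 := @Ordinal 3 0 isT.
Definition o1 : 'I_3 := @Ordinal 3 1 isT.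
Definition o2 : 'I_3 := @Ordinal 3 2 isT.
Definition letters : seq 'I_3 := [:: o0; o1; o2].
Definition l0 : word := [:: o0; o1; o2; o0; o2; o1; o2; o0; o1; o2; o1; o0; o2; o1; o2; o0; o2; o1; o0].
Definition l1 : word := [:: o1; o2; o0; o1; o0; o2; o0; o1; o2; o0; o2; o1; o0; o2; o0; o1; o0; o2; o1].
Definition l2 : word := [:: o2; o0; o1; o2; o1; o0; o1; o2; o0; o1; o0; o2; o1; o0; o1; o2; o1; o0; o2].
Definition img (a : 'I_3) : word := match val a with 0 => l0 | 1 => l1 | _ => l2 end.
Definition hw (w : word) : word := flatten (map img w).

Definition periodic (w : word) i L p : bool :=
  take (L - p) (drop i w) == take (L - p) (drop (i + p) w).
Definition bfree (v : word) : bool :=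
  all (fun i => all (fun L => all (fun p => (i + L <= size v) ==> (7 * p < 4 * L) ==> ~~ periodic v i L p)
     (iota 1 (size v))) (iota 0 (size v).+1)) (iota 0 (size v)).
Definition L0 p := (7 * p) %/ 4 + 1.
Definition goodA (v : word) : bool :=
  let u := hw v in
  all (fun i => all (fun p => (i + L0 p <= size u) ==> ~~ periodic u i (L0 p) p) (iota 1 49)) (iota 0 19).
Fixpoint words n : seq word :=
  if n is n'.+1 then [seq a :: v | a <- letters, v <- words n'] else [:: [::]].
Definition checkA := all (fun n => all (fun v => if bfree v then goodA v else true) (words n)) (iota 0 8).
Lemma checkA_ok : checkA. Proof. vm_compute. reflexivity. Qed.
Lemma check_sync : all (fun a => all (fun b => all (fun c =>
  all (fun r => take 19 (drop r (img b ++ img c)) != img a) (iota 1 18)) letters) letters) letters.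
Proof. vm_compute. reflexivity. Qed.
Lemma check_inj : all (fun a => all (fun b => (a != b) ==>
  all (fun k => nth ord0 (img a) k != nth ord0 (img b) k) (iota 0 19)) letters) letters.
Proof. vm_compute. reflexivity. Qed.
Lemma check_pal : all (fun a => rev (img a) == img a) letters.
Proof. vm_compute. reflexivity. Qed.
Lemma check_pow : all (fun a => all (fun k => nth ord0 (img a) (1+k) == nth ord0 (img a) (5+k)) (iota 0 3)) letters.
Proof. vm_compute. reflexivity. Qed.
Lemma mem_letters (a : 'I_3) : a \in letters.
Proof. by case: a => -[|[|[|m]]] i. Qed.


Lemma size_img a : size (img a) = 19. Proof. by rewrite /img; case: (val a) => [|[|]]. Qed.
Lemma hw_cons a w : hw (a :: w) = img a ++ hw w. Proof. by []. Qed.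
Lemma size_hw w : size (hw w) = 19 * size w.
Proof. elim: w => [|a w IH] //; rewrite hw_cons size_cat size_img IH /=; lia. Qed.

Lemma nth_h w j k : j < size w -> k < 19 ->
  nth ord0 (hw w) (19 * j + k) = nth ord0 (img (nth ord0 w j)) k.
Proof.
elim: w j => [|a w IH] [|j] //= hj hk; rewrite hw_cons nth_cat size_img.
  by rewrite muln0 add0n hk.
rewrite ifF; last by lia.
have -> : 19 * j.+1 + k - 19 = 19 * j + k by lia.
exact: IH.
Qed.

Lemma hw_drop j w : hw (drop j w) = drop (19 * j) (hw w).
Proof.
elim: w j => [|a w IH] [|j] //=; first by rewrite muln0 drop0.
rewrite hw_cons drop_cat size_img ifF; last by lia.
rewrite IH; congr drop; lia.
Qed.

Lemma hw_take j w : hw (take j w) = take (19 * j) (hw w).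
Proof.
elim: w j => [|a w IH] [|j] //=; first by rewrite muln0 take0.
rewrite !hw_cons take_cat size_img ifF; last by lia.
rewrite IH; congr (_ ++ take _ _); lia.
Qed.

Lemma hw_rcons w a : hw (rcons w a) = hw w ++ img a.
Proof. by rewrite /hw map_rcons flatten_rcons. Qed.

Lemma hw_rev w : hw (rev w) = rev (hw w).
Proof.
elim: w => [|a w IH] //; rewrite rev_cons hw_rcons IH hw_cons rev_cat; congr (_ ++ _).
by have /allP/(_ a (mem_letters a))/eqP -> := check_pal.
Qed.

Definition rep (w : word) i L p :=
  i + L <= size w /\ forall k, k + p < L -> nth ord0 w (i+k) = nth ord0 w (i+k+p).
Definition afree (w : word) := forall i L p, 0 < p -> rep w i L p -> 4 * L <= 7 * p.

Lemma periodicP w i L p : i + L <= size w -> reflect (rep w i L p) (periodic w i L p).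
Proof.
move=> hs; apply: (iffP eqP) => [E|[_ H]].
  split => // k hk.
  have := congr1 (fun s => nth ord0 s k) E => /=.
  rewrite !nth_take; try lia. by rewrite !nth_drop addnAC.
apply: (@eq_from_nth _ ord0).
  rewrite !size_take_min !size_drop; lia.
move=> k; rewrite size_take_min size_drop => hk.
rewrite !nth_take; try lia. rewrite !nth_drop addnAC; apply: H; lia.
Qed.

Lemma rep_td w n j a b c : rep w (j + a) b c -> a + b <= n -> rep (take n (drop j w)) a b c.
Proof.
move=> [hs H] hn; split.
  rewrite size_take_min size_drop; lia.
move=> k hk; rewrite !nth_take; try lia. rewrite !nth_drop -!addnA.
by rewrite !addnA H.
Qed.

Lemma td_rep w n j a b c : 0 < b -> rep (take n (drop j w)) a b c -> rep w (j + a) b c.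
Proof.
move=> b0 [hs H]; move: hs; rewrite size_take_min size_drop => hs; split; first lia.
move=> k hk; have := H k hk; rewrite !nth_take; try lia. rewrite !nth_drop.
by rewrite !addnA.
Qed.

Lemma afree_td w n j : afree w -> afree (take n (drop j w)).
Proof.
move=> F i L p p0 R; case: L R => [|L] R; first lia.
exact: F p0 (td_rep _ R).
Qed.

Lemma afree_bfree v : afree v -> bfree v.
Proof.
move=> F; apply/allP => i _; apply/allP => L _; apply/allP => p; rewrite mem_iota => hp.
apply/implyP => hs; apply/implyP => hlt; apply/negP => /(periodicP p hs) R.
have := F i L p ltac:(lia) R; lia.
Qed.

Lemma words_complete v : v \in words (size v).
Proof.
elim: v => [|a v IH]; first by [].
change (a :: v \in [seq x :: y | x <- letters, y <- words (size v)]).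
exact: (allpairs_f (fun x y => x :: y) (mem_letters a) IH).
Qed.


Lemma caseA w i L p : afree w -> 0 < p -> p < 50 -> 7 * p < 4 * L -> rep (hw w) i L p -> False.
Proof.
move=> F p0 hp hlt R.
have hL' : L0 p <= L by rewrite /L0; lia.
have hL'2 : L0 p <= 86 by rewrite /L0; lia.
have R' : rep (hw w) i (L0 p) p.
  by case: R => hs H; split; [lia | move=> k hk; apply: H; lia].
pose j0 := i %/ 19; pose i' := i %% 19.
have hi : i = 19 * j0 + i' by rewrite /j0 /i' mulnC -divn_eq.
have hi' : i' < 19 by rewrite ltn_pmod.
pose v := take 7 (drop j0 w).
have Bv := afree_bfree (afree_td (n:=7) (j:=j0) F).
have hv : size v < 8 by rewrite size_take_min; lia.
have Rv : rep (hw v) i' (L0 p) p.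
  rewrite /v hw_take hw_drop; apply: rep_td; last by lia.
  by rewrite -hi.
have := checkA_ok => /allP/(_ (size v)); rewrite mem_iota => /(_ ltac:(lia)).
move=> /allP/(_ v (words_complete v)); rewrite Bv /goodA.
move=> /allP/(_ i'); rewrite mem_iota => /(_ ltac:(lia)).
move=> /allP/(_ p); rewrite mem_iota => /(_ ltac:(lia)).
case: Rv => hs H.
rewrite hs /= => /negP; apply; apply/(periodicP p hs); by split.
Qed.

Lemma inj_img a b k : k < 19 -> nth ord0 (img a) k = nth ord0 (img b) k -> a = b.
Proof.
move=> hk E; case: (eqVneq a b) => // ne.
have := check_inj => /allP/(_ a (mem_letters a))/allP/(_ b (mem_letters b)).
move=> /implyP/(_ ne)/allP/(_ k); rewrite mem_iota => /(_ ltac:(lia)).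
by rewrite E eqxx.
Qed.

Lemma afree_hw w : afree w -> afree (hw w).
Proof.
move=> F i L p p0 R; rewrite leqNgt; apply/negP => hlt.
case: (ltnP p 50) => hp; first exact: (caseA F p0 hp hlt R).
have hL : p + 38 <= L by lia.
case: (R) => hs H; rewrite size_hw in hs.
pose t := (i + 18) %/ 19.
have ht1 : i <= 19 * t by rewrite /t; lia.
have ht2 : 19 * t <= i + 18 by rewrite /t; lia.
have tw : t < size w by lia.
pose a := nth ord0 w t.
pose q := (19 * t + p) %/ 19; pose r := (19 * t + p) %% 19.
have hq : 19 * t + p = 19 * q + r by rewrite /q /r [19 * (_ %/ _)]mulnC -divn_eq.
have hr19 : r < 19 by rewrite ltn_pmod.
have Hs : forall k, k < 19 -> nth ord0 (hw w) (19 * q + r + k) = nth ord0 (img a) k.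
  move=> k hk; rewrite -hq -(nth_h tw hk).
  have := H (19 * t + k - i) ltac:(lia).
  have -> : i + (19 * t + k - i) = 19 * t + k by lia.
  have -> : 19 * t + k + p = 19 * t + p + k by lia.
  by move=> ->.
case: (posnP r) => hr.
  (* synchronized: pull back *)
  pose p' := q - t.
  have hp' : p = 19 * p' by rewrite /p'; lia.
  pose j0 := i %/ 19; pose j1 := (i + L - 1) %/ 19.
  have hj0 : 19 * j0 <= i < 19 * j0 + 19 by rewrite /j0; lia.
  have hj1 : 19 * j1 <= i + L - 1 < 19 * j1 + 19 by rewrite /j1; lia.
  have Rw : rep w j0 (j1 - j0 + 1) p'.
    split; first lia.
    move=> k hk.
    case: k hk => [|k] hk.
      have hx : i %% 19 < 19 by rewrite ltn_pmod.
      have e : i = 19 * j0 + i %% 19 by rewrite /j0 mulnC -divn_eq.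
      have := H 0 ltac:(lia).
      rewrite addn0 {1}e nth_h; [|lia|lia].
      have -> : i + p = 19 * (j0 + p') + i %% 19 by lia.
      rewrite nth_h; [|lia|lia].
      rewrite addn0; exact: inj_img.
    have := H (19 * (j0 + k.+1) - i) ltac:(lia).
    have -> : i + (19 * (j0 + k.+1) - i) = 19 * (j0 + k.+1) + 0 by lia.
    have -> : 19 * (j0 + k.+1) + 0 + p = 19 * (j0 + k.+1 + p') + 0 by lia.
    rewrite !nth_h; [|lia|lia|lia|lia].
    exact: inj_img.
  have := F j0 (j1 - j0 + 1) p' ltac:(lia) Rw; lia.
(* unsynchronized: contradiction *)
have hq1 : q.+1 < size w by lia.
pose b := nth ord0 w q; pose c := nth ord0 w q.+1.
have D : drop q w = b :: c :: drop q.+2 w.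
  rewrite (drop_nth ord0 (n := q)); last lia.
  rewrite (drop_nth ord0 (n := q.+1)); last lia. by [].
have E : take 19 (drop r (img b ++ img c)) = img a.
  apply: (@eq_from_nth _ ord0).
    rewrite size_take_min size_drop size_cat !size_img; lia.
  move=> k; rewrite size_take_min size_drop size_cat !size_img => hk.
  rewrite nth_take; last lia. rewrite nth_drop -Hs; last lia.
  have : nth ord0 (hw w) (19 * q + (r + k)) = nth ord0 (hw (drop q w)) (r + k)
    by rewrite hw_drop nth_drop.
  rewrite addnA => ->; rewrite D !hw_cons catA [in RHS]nth_cat size_cat !size_img ifT //; lia.
have := check_sync => /allP/(_ a (mem_letters a))/allP/(_ b (mem_letters b)).
move=> /allP/(_ c (mem_letters c))/allP/(_ r); rewrite mem_iota => /(_ ltac:(lia)).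
by rewrite E eqxx.
Qed.


Import Order.TTheory GRing.Theory Num.Theory.

Definition P n := iter n hw [:: o0].

Lemma size_P n : size (P n) = 19 ^ n.
Proof. elim: n => [|n IH] //; rewrite /P iterS -/(P n) size_hw IH expnS. done. Qed.

Lemma pal_P n : rev (P n) = P n.
Proof. elim: n => [|n IH] //; by rewrite /P iterS -/(P n) -hw_rev IH. Qed.

Lemma afree_P n : afree (P n).
Proof.
elim: n => [|n IH]; last by rewrite /P iterS -/(P n); exact: afree_hw.
move=> i L p p0 [hs _]; rewrite /= in hs; lia.
Qed.

Lemma rat_bound (a b : nat) : (0 < b)%N -> (4 * a <= 7 * b)%N -> (a%:R / b%:R <= 7%:R / 4%:R :> rat)%R.
Proof.
move=> hb h. rewrite ler_pdivrMr ?ltr0n //. rewrite mulrAC ler_pdivlMr ?ltr0n //.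
by rewrite -!natrM ler_nat; move: h; rewrite mulnC [(7 * b)%N]mulnC.
Qed.

Lemma foldr_max_le (s : seq rat) c : (0 <= c)%R -> (forall z, z \in s -> z <= c)%R ->
  (foldr Num.max 0 s <= c)%R.
Proof.
move=> c0; elim: s => [|z s IH] H /=; first exact: c0.
rewrite ge_max H ?mem_head //=; apply: IH => y hy; apply: H; by rewrite in_cons hy orbT.
Qed.

Lemma le_foldr_max (s : seq rat) z : z \in s -> (z <= foldr Num.max 0 s)%R.
Proof.
elim: s => [|y s IH] //=; rewrite in_cons => /orP [/eqP ->|/IH h]; rewrite le_max ?lexx //.
by rewrite h orbT.
Qed.

Lemma pal_center (w : word) st l : rev w = w -> st + l <= size w -> 2 * st + l = size w ->
  rev (take l (drop st w)) = take l (drop st w).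
Proof.
move=> R h1 h2.
have sx : size (take l (drop st w)) = l by rewrite size_take_min size_drop; lia.
apply: (@eq_from_nth _ ord0); first by rewrite size_rev.
move=> k; rewrite size_rev sx => hk.
rewrite nth_rev sx // !nth_take; try lia. rewrite !nth_drop.
rewrite -{1}R nth_rev; last lia.
congr nth; lia.
Qed.

Lemma exp_le (y : word) : afree y -> (exponent y <= 7%:R / 4%:R)%R.
Proof.
move=> F; apply: foldr_max_le => //.
move=> z /mapP [q]; rewrite mem_filter mem_iota => /andP [hp hq] ->.
apply: rat_bound; first lia.
apply: (F 0 (size y) q); first lia.
split => // k hk; rewrite add0n.
move: hp => /allP/(_ k); rewrite mem_iota => /(_ ltac:(lia)).
by rewrite hk => /eqP.
Qed.

Theorem mainTheorem5 (l : nat) :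
  odd l -> 17 <= l ->
  exists w : word, size w = l /\ w = rev w /\ crit_exp w = (7%:R / 4%:R : rat)%R.
Proof.
move=> hodd hl.
pose M := 19 ^ l.
have hM : l < M by rewrite /M ltn_expl.
have hMo : M %% 2 = 1 by rewrite modn2 /M oddX orbT.
have hlo : l %% 2 = 1 by rewrite modn2 hodd.
pose c := M %/ 2.
pose st := (19 * M - l) %/ 2.
have SP : size (P l.+1) = 19 * M by rewrite size_P expnS.
have hc : c < size (P l) by rewrite size_P -/M /c; lia.
pose x := take l (drop st (P l.+1)).
have sx : size x = l by rewrite /x size_take_min size_drop SP /st; lia.
have Fx : afree x := afree_td (n := l) (j := st) (@afree_P l.+1).
exists x; split => //; split.
  rewrite /x pal_center ?pal_P // SP /st; lia.
apply/eqP; rewrite eq_le; apply/andP; split.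
  apply: foldr_max_le => //.
  move=> z /allpairsPdep [i [j [hi hj ->]]].
  exact: exp_le (afree_td (n := j) (j := i) Fx).
pose i0 := 19 * c + 1 - st.
pose a := nth ord0 (P l) c.
have hx : forall k, k < 7 -> nth ord0 x (i0 + k) = nth ord0 (img a) (1 + k).
  move=> k hk; rewrite /x nth_take; last by rewrite /i0 /st; lia.
  rewrite nth_drop.
  have -> : st + (i0 + k) = 19 * c + (1 + k) by rewrite /i0 /st; lia.
  by rewrite /P iterS -/(P l) nth_h //; lia.
pose y := factor x i0 7.
have sy : size y = 7 by rewrite /y /factor size_take_min size_drop sx /i0 /st; lia.
have ny : forall k, k < 7 -> nth ord0 y k = nth ord0 (img a) (1 + k).
  move=> k hk; rewrite /y /factor nth_take // nth_drop; exact: hx.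
have Py : has_period y 4.
  have sy' : size (take 7 (drop i0 x)) = 7 := sy.
  apply/allP => k; rewrite mem_iota ?sy ?sy' => hk; apply/implyP; rewrite ?sy ?sy' => hk2.
  rewrite !ny; try lia.
  have := check_pow => /allP/(_ a (mem_letters a))/allP/(_ k); rewrite mem_iota.
  have hk3 : k < 3 by rewrite -(ltn_add2r 4).
  move=> H; rewrite (addnC k 4) addnA; apply: H; by rewrite leq0n add0n hk3.
apply: le_trans (le_foldr_max _); last first.
  apply/allpairsPdep; exists i0, 7; split => //.
    rewrite mem_iota sx /i0 /st; lia.
  rewrite mem_iota sx /i0 /st; lia.
apply: le_trans (le_foldr_max _); last first.
  apply/mapP; exists 4; last by rewrite -/y sy.
  by rewrite mem_filter Py mem_iota sy.
exact: lexx.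
Qed.
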